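(* Let $\alpha=(\alpha_1,\ldots,\alpha_n)$ be a composition, $\sigma\in S_n$, and $i\in\{1,\ldots,n-1\}$ with $\alpha_i=\alpha_{i+1}$. Then for every $T\in\mathrm{NAF}(\alpha,\sigma)$, $$\sum_{U\in\mathrm{F}(\alpha,\sigma s_i)}P_i(T,U)=1.$$
   Context: Permutations are in one-line notation; $\sigma s_i$ is $\sigma$ with the entries in positions $i,i+1$ exchanged. A composition is a sequence of nonnegative integers. The skyline diagram is $\mathrm{dg}(\alpha)=\{(j,r):1\le j\le n,\ 1\le r\le\alpha_j\}$ ($j$ = column, $r$ = row) and the augmented diagram is $\mathrm{adg}(\alpha)=\mathrm{dg}(\alpha)\cup\{(j,0):1\le j\le n\}$ (row $0$ is the basement). For $u=(j,r)\in\mathrm{dg}(\alpha)$: $\mathrm{leg}(u)=\alpha_j-r$; the left arm set is $\{(j',r-1)\in\mathrm{adg}(\alpha):j'<j,\ \alpha_{j'}<\alpha_j\}$, the right arm set is $\{(j',r)\in\mathrm{dg}(\alpha):j'>j,\ \alpha_{j'}\le\alpha_j\}$, $\mathrm{Arm}(u)$ is their union and $\mathrm{arm}(u)=|\mathrm{Arm}(u)|$. Two boxes of $\mathrm{adg}(\alpha)$ attack each other if they are in the same row, or in consecutive rows with the box in the higher row strictly to the right of the box in the lower row. A filling of shape $\alpha$ and basement $\tau\in S_n$ is a map $T:\mathrm{adg}(\alpha)\to\{1,\ldots,n\}$ with $T(j,0)=\tau_j$; $\mathrm{F}(\alpha,\tau)$ is the set of these, and $\mathrm{NAF}(\alpha,\tau)$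 the subset of non-attacking ones (attacking boxes have distinct entries). For integers $a,b$ let $\chi(a,b)=1$ if $a>b$ and $0$ otherwise, and $\chi(a,b,c)=\chi(a,b)+\chi(b,c)-\chi(a,c)$. Fix $i$ with $\alpha_i=\alpha_{i+1}$. For a filling $T$ and $0\le r\le\alpha_i$, $\mathrm{swap}_r(T)$ exchanges the entries of boxes $(i,r)$ and $(i+1,r)$, and $\Omega_{0,h}=\mathrm{swap}_h\circ\cdots\circ\mathrm{swap}_0$. For $T\in\mathrm{NAF}(\alpha,\tau)$ and $0\le r\le\alpha_i-1$, let $a=T(i,r)$, $b=T(i+1,r)$, $c=T(i,r+1)$, $d=T(i+1,r+1)$, $A=\mathrm{arm}(i+1,r+1)$, $\ell=\mathrm{leg}(i+1,r+1)$, and define $\rho_r(T)\in\mathbb{Q}(q,t)$: if $a,b,c,d$ are distinct, $\rho_r(T)=0$ when $\chi(c,d,a)=\chi(c,d,b)$ and $\rho_r(T)=1$ when $\chi(c,d,a)=\chi(d,c,b)$; if exactly three of them are distinct, then $\rho_r(T)=0$ if $b=c$, $\rho_r(T)=1$ if $b=d$, and $\rho_r(T)=t^{1-\chi(d,a,b)}\frac{1-q^{\ell+1}t^{A+1}}{1-q^{\ell+1}t^{A+2}}$ if $a=c$; if $a=c$ and $b=d$, $\rho_r(T)=1$. Also set $\rho_{\alpha_i}(T)=0$. For $T\in\mathrm{NAF}(\alpha,\tau)$ and $U\in\mathrm{F}(\alpha,\tau s_i)$, $P_i(T,U)=\left(\prod_{r=0}^{h-1}\rho_r(T)\right)(1-\rho_h(T))$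 if $U=\Omega_{0,h}(T)$ for some $h\in\{0,\ldots,\alpha_i\}$, and $P_i(T,U)=0$ otherwise. *)

(* Defs.v *)
From HB Require Import structures.
From mathcomp Require Import all_boot all_order all_algebra all_fingroup.
From mathcomp Require Import fraction.
Set Implicit Arguments. Unset Strict Implicit. Unset Printing Implicit Defensive.
Import Order.TTheory GRing.Theory Num.Theory.
Local Open Scope ring_scope.

(* Conventions (0-indexed): columns j = 0..n-1 (paper column j+1), rows
   r = 0..alpha_j (row 0 = basement), entries in 'I_n (paper value v+1).
   Only the relative order of entries matters (chi), so the shift is harmless. *)

Definition Kqt := {fraction {poly {poly rat}}}.
Definition qv : Kqt := tofrac (('X : {poly rat})%:P).
Definition tv : Kqt := tofrac ('X : {poly {poly rat}}).

Section Fillings.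
Variables (n : nat) (alpha : n.-tuple nat).

Definition al (j : nat) : nat := nth 0%N alpha j.
Definition maxpart : nat := \max_(x <- alpha) x.

Definition cell := {c : 'I_n * 'I_maxpart.+1 | (c.2 <= al c.1)%N}.

Definition filling := {ffun cell -> 'I_n}.

Definition lookup (T : filling) (j r : nat) : option 'I_n :=
  match @insub _ (fun k => (k < n)%N) 'I_n j,
        @insub _ (fun k => (k < maxpart.+1)%N) 'I_maxpart.+1 r with
  | Some j', Some r' =>
      omap T (@insub _ (fun c : 'I_n * 'I_maxpart.+1 => (c.2 <= al c.1)%N) cell (j', r'))
  | _, _ => None
  end.

Definition ent (T : filling) (j r : nat) : nat := odflt 0%N (omap val (lookup T j r)).

Definition F (tau : 'S_n) : {set filling} :=
  [set T : filling | [forall j : 'I_n, lookup T j 0 == Some (tau j)]].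

Definition attack (c1 c2 : cell) : bool :=
  let: (j1, r1) := val c1 in let: (j2, r2) := val c2 in
  [|| (r1 : nat) == r2,
      ((r2 : nat) == r1.+1) && (j1 < j2)%N
    | ((r1 : nat) == r2.+1) && (j2 < j1)%N].

Definition NAF (tau : 'S_n) : {set filling} :=
  [set T in F tau | [forall c1, forall c2,
      ((c1 != c2) && attack c1 c2) ==> (T c1 != T c2)]].

Definition leg (j r : nat) : nat := (al j - r)%N.
Definition arm (j r : nat) : nat :=
  (count (fun j' => [&& (j' < j)%N, (al j' < al j)%N & (r.-1 <= al j')%N]) (iota 0 n)
 + count (fun j' => [&& (j < j')%N, (al j' <= al j)%N, (1 <= r)%N & (r <= al j')%N])
         (iota 0 n))%N.

Definition chi (a b : nat) : int := if (b < a)%N then 1 else 0.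
Definition chi3 (a b c : nat) : int := chi a b + chi b c - chi a c.

Variable i : nat.

Definition Omega (h : nat) (T : filling) : filling :=
  [ffun c : cell =>
     let: (j, r) := val c in
     if ((r : nat) <= h)%N && ((j : nat) == i) then odflt (T c) (lookup T i.+1 r)
     else if ((r : nat) <= h)%N && ((j : nat) == i.+1) then odflt (T c) (lookup T i r)
     else T c].

Definition rho (T : filling) (r : nat) : Kqt :=
  if (r < al i)%N then
    let a := ent T i r in let b := ent T i.+1 r in
    let c := ent T i r.+1 in let d := ent T i.+1 r.+1 in
    let A := arm i.+1 r.+1 in let l := leg i.+1 r.+1 in
    let nd := size (undup [:: a; b; c; d]) in
    if nd == 4%N then
      (if chi3 c d a == chi3 c d b then 0
       else if chi3 c d a == chi3 d c b then 1 else 0)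
    else if (nd == 3%N) && (b == c) then 0
    else if (nd == 3%N) && (b == d) then 1
    else if (nd == 3%N) && (a == c) then
      tv ^ (1 - chi3 d a b) *
        ((1 - qv ^+ l.+1 * tv ^+ A.+1) / (1 - qv ^+ l.+1 * tv ^+ A.+2))
    else if (a == c) && (b == d) then 1
    else 0
  else 0.

Definition Pi (T U : filling) : Kqt :=
  match [pick h : 'I_(al i).+1 | U == Omega h T] with
  | Some h => (\prod_(r < h) rho T r) * (1 - rho T h)
  | None => 0
  end.

End Fillings.

(* Main.v *)
Require Import Defs.
From HB Require Import structures.
From mathcomp Require Import all_boot all_order all_algebra all_fingroup.
From mathcomp Require Import fraction.
From mathcomp Require Import zify.
Import GRing.Theory.
Local Open Scope ring_scope.

Lemma telesc (R : comRingType) (f : nat -> R) (m : nat) :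
  \sum_(h < m.+1) (\prod_(r < h) f r) * (1 - f h) = 1 - \prod_(r < m.+1) f r.
Proof.
elim: m => [|m IH].
  by rewrite big_ord1 big_ord0 big_ord1 mul1r.
rewrite big_ord_recr /= IH [in RHS]big_ord_recr /=.
by rewrite mulrBr mulr1 addrA subrK.
Qed.

Section S.
Variables (n : nat) (alpha : n.-tuple nat).

Lemma lookupE (T : filling alpha) (j : 'I_n) (r : nat) (Hr : (r < (maxpart alpha).+1)%N)
  (H : (r <= al alpha j)%N) :
  lookup T j r = Some (T (exist _ (j, Ordinal Hr) H)).
Proof.
rewrite /lookup.
have -> : insub (nat_of_ord j) = Some j by exact: valK.
have -> : @insub _ (fun k => (k < (maxpart alpha).+1)%N) 'I_(maxpart alpha).+1 r
   = Some (Ordinal Hr) by rewrite (valK (Ordinal Hr)).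
rewrite /=.
have -> : @insub _ (fun c : 'I_n * 'I_(maxpart alpha).+1 => (c.2 <= al alpha c.1)%N)
   (cell alpha) (j, Ordinal Hr) = Some (exist _ (j, Ordinal Hr) H).
  by rewrite (valK (exist (fun c : 'I_n * 'I_(maxpart alpha).+1 => (c.2 <= al alpha c.1)%N) (j, Ordinal Hr) H)).
by [].
Qed.

Lemma al_le (j : 'I_n) : (al alpha j <= maxpart alpha)%N.
Proof.
rewrite /al /maxpart.
apply: (@leq_bigmax_seq _ _ _ (fun x => x)) => //.
by apply: mem_nth; rewrite size_tuple.
Qed.

End S.

Theorem proposition3p4 (n : nat) (alpha : n.-tuple nat) (sigma : 'S_n)
    (i : 'I_n) (Hi : (i.+1 < n)%N) (Heq : al alpha i = al alpha i.+1)
    (T : filling alpha) :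
  T \in NAF alpha sigma ->
  \sum_(U in F alpha (tperm i (Ordinal Hi) * sigma)%g) Pi i T U = 1.
Proof.
rewrite inE => /andP [HF HN].
rewrite inE in HF; move/forallP: HF => HF.
move/forallP: HN => HN.
set m := al alpha i.
set i' := Ordinal Hi.
pose Om := fun h : 'I_m.+1 => Omega i h T.
have Hm : forall h : 'I_m.+1, (h < (maxpart alpha).+1)%N.
  move=> h; have := ltn_ord h; have := @al_le _ alpha i; rewrite -/m; lia.
have Hmi : forall h : 'I_m.+1, (h <= al alpha i)%N by move=> h; rewrite -ltnS.
have Hmi' : forall h : 'I_m.+1, (h <= al alpha i')%N by move=> h; rewrite /= -Heq -ltnS.
have Ominj : injective Om.
  suff W : forall h h' : 'I_m.+1, (h < h')%N -> Om h <> Om h'.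
    move=> h h' E; case: (ltngtP h h') => [/W C|/W C|/val_inj //].
      by case: (C E).
    by case: (C (esym E)).
  move=> h h' lt E.
  pose c := exist (fun c : 'I_n * 'I_(maxpart alpha).+1 => (c.2 <= al alpha c.1)%N) (i, Ordinal (Hm h')) (Hmi h').
  pose c' := exist (fun c : 'I_n * 'I_(maxpart alpha).+1 => (c.2 <= al alpha c.1)%N) (i', Ordinal (Hm h')) (Hmi' h').
  have := congr1 (fun U : filling alpha => U (c : cell alpha)) E.
  rewrite /Om /Omega !ffunE /= leqnn eqxx /=.
  rewrite leqNgt lt /=.
  rewrite (@lookupE _ _ T i' h' (Hm h') (Hmi' h')) /=.
  move=> EE.
  have := HN c; move/forallP/(_ c')/implyP => H.
  suff: T c != T c' by rewrite EE eqxx.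
  apply: H; apply/andP; split.
    apply/eqP => /(congr1 (fun x => nat_of_ord (val x).1)) /=; lia.
  by rewrite /attack /= eqxx.
set S := Om @: [set: 'I_m.+1].
have SF : S \subset F alpha (tperm i i' * sigma)%g.
  apply/subsetP => U /imsetP [h _ ->]; rewrite inE; apply/forallP => j.
  rewrite (@lookupE _ _ (Om h) j 0 (ltn0Sn _) (leq0n _)) /Om /Omega ffunE /= permM.
  case: (eqVneq (j:nat) i) => [/val_inj ->|ji].
    rewrite /= ?eqxx tpermL.
    by have := HF i'; move/eqP => /= ->.
  case: (eqVneq (j:nat) i.+1) => [E'|ji'].
    have -> : j = i' by apply: val_inj.
    rewrite /= ?eqxx tpermR.
    have := HF i; move/eqP => /= ->.
    by [].
  have nij : i != j by apply/eqP => E'; move: ji; rewrite -E' eqxx.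
  have ni'j : i' != j by apply/eqP => E'; move: ji'; rewrite -E' /= eqxx.
  rewrite tpermD //.
  have := HF j; rewrite (@lookupE _ _ T j 0 (ltn0Sn _) (leq0n _)).
  by rewrite ?(negbTE ji) ?(negbTE ji') ?andbF.
rewrite (big_setID S) /= (setIidPr SF) [X in _ + X]big1 ?addr0; last first.
  move=> U; rewrite inE => /andP [notS _]; rewrite /Pi; case: pickP => // h /eqP EU.
  case/negP: notS; rewrite EU; exact: (imset_f Om (in_setT h)).
rewrite big_imset /=; last by move=> x y _ _; apply: Ominj.
transitivity (\sum_(h < m.+1) (\prod_(r < h) rho i T r) * (1 - rho i T h)).
  apply: eq_big => [h|h _]; first by rewrite in_setT.
  rewrite /Pi; case: pickP => [h' /eqP E|/(_ h)]; last by rewrite eqxx.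
  by have := Ominj _ _ E => ->.
have R0 : rho i T m = 0 by rewrite /rho ltnn.
by rewrite telesc big_ord_recr /= R0 mulr0 subr0.
Qed.
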